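(* Let $n\ge3$, $\mu_1,\mu_2,\beta>0$, $p=2q+1$ with $\frac{n}{n-2}<p<\frac{n+2}{n-2}$, let $(u,v)$ be a positive solution of (S) (radially symmetric), and let $\bar u,\bar v$ be its Kelvin transform and $\bar w_1,\bar w_2$ as defined in the context. Then (1) $\bar u'(r)<0$ and $\bar v'(r)<0$ for all $r>0$; (2) $\bar w_i'(t)>-\delta_0\bar w_i(t)$ for all $t\in\mathbb{R}$, $i=1,2$.
   Context: System (S): $-\Delta u=\mu_1u^{2q+1}+\beta u^qv^{q+1}$, $-\Delta v=\mu_2v^{2q+1}+\beta v^qu^{q+1}$ in $\mathbb{R}^n\setminus\{0\}$; positive solutions are $C^2(\mathbb{R}^n\setminus\{0\})$ pairs with $u,v>0$. Kelvin transform: $\bar u(x)=|x|^{2-n}u(x/|x|^2)$, $\bar v(x)=|x|^{2-n}v(x/|x|^2)$; it solves $-\Delta\bar u=|x|^\alpha(\mu_1\bar u^{2q+1}+\beta\bar u^q\bar v^{q+1})$, $-\Delta\bar v=|x|^\alpha(\mu_2\bar v^{2q+1}+\beta\bar v^q\bar u^{q+1})$ in $\mathbb{R}^n\setminus\{0\}$ with $\alpha=p(n-2)-(n+2)\in(-2,0)$; radial functions are written $\bar u(x)=\bar u(|x|)$. $\delta_0=\frac{2+\alpha}{p-1}$, $\bar w_1(t)=e^{-\delta_0t}\bar u(e^{-t})$, $\bar w_2(t)=e^{-\delta_0t}\bar v(e^{-t})$. *)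

(* Defs.v *)
From Stdlib Require Import Reals.
Open Scope R_scope.

Definition dimR (n : nat) : R := INR n.

Definition pexp (q : R) : R := 2 * q + 1.

Definition alpha (n : nat) (q : R) : R :=
  pexp q * (dimR n - 2) - (dimR n + 2).

Definition delta0 (n : nat) (q : R) : R := (2 + alpha n q) / (pexp q - 1).

Definition C2_pos (U U1 U2 : R -> R) : Prop :=
  forall r, 0 < r ->
    derivable_pt_lim U r (U1 r) /\
    derivable_pt_lim U1 r (U2 r) /\
    continuity_pt U2 r.

(* Radial Laplacian in R^n of x |-> U(|x|), at |x| = r > 0:
   U''(r) + (n-1)/r U'(r). *)
Definition radial_lap (n : nat) (U1 U2 : R -> R) (r : R) : R :=
  U2 r + (dimR n - 1) / r * U1 r.

(* (U,V) are the radial profiles of a positive C^2 solution of (S) on R^n\{0}: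
   -Δu = mu1 u^{2q+1} + beta u^q v^{q+1},
   -Δv = mu2 v^{2q+1} + beta v^q u^{q+1}. *)
Definition radial_positive_solution (n : nat) (mu1 mu2 beta q : R)
  (U V : R -> R) : Prop :=
  exists U1 U2 V1 V2 : R -> R,
    C2_pos U U1 U2 /\ C2_pos V V1 V2 /\
    forall r, 0 < r ->
      0 < U r /\ 0 < V r /\
      - radial_lap n U1 U2 r =
        mu1 * Rpower (U r) (2 * q + 1)
        + beta * Rpower (U r) q * Rpower (V r) (q + 1) /\
      - radial_lap n V1 V2 r =
        mu2 * Rpower (V r) (2 * q + 1)
        + beta * Rpower (V r) q * Rpower (U r) (q + 1).

Definition kelvin (n : nat) (U : R -> R) (r : R) : R :=
  Rpower r (2 - dimR n) * U (/ r).

Definition wbar (n : nat) (q : R) (Ub : R -> R) (t : R) : R :=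
  exp (- delta0 n q * t) * Ub (exp (- t)).

(* Main.v *)
Require Import Defs.
From Stdlib Require Import Reals Lra Lia.
Open Scope R_scope.

Lemma dext (f g : R -> R) (x l l' : R) :
  (forall y, f y = g y) -> derivable_pt_lim f x l -> l = l' ->
  derivable_pt_lim g x l'.
Proof.
  intros Hfg Hd <-. intros eps Heps. destruct (Hd eps Heps) as [d Hd'].
  exists d. intros h Hh Hhd. rewrite <- !Hfg. now apply Hd'.
Qed.

Lemma d_inv (r : R) : r <> 0 -> derivable_pt_lim (fun x => / x) r (- / (r * r)).
Proof.
  intros Hr. eapply dext.
  2: { apply (derivable_pt_lim_div (fct_cte 1) id r 0 1);
       [apply derivable_pt_lim_const | apply derivable_pt_lim_id | exact Hr]. }
  - intros y. unfold div_fct, fct_cte, id, Rdiv. ring.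
  - unfold fct_cte, id, Rsqr. field. exact Hr.
Qed.

Section Comp.
Variables (n m : nat) (U U1 U2 : R -> R).
Hypothesis Hn : n = (m + 3)%nat.
Hypothesis HC : C2_pos U U1 U2.
Hypothesis Hsol : forall r, 0 < r -> 0 < U r /\ radial_lap n U1 U2 r < 0.

Let g (s : R) := (dimR n - 2) * U s + s * U1 s.

Lemma dimR_eq : dimR n - 2 = INR (m + 1).
Proof. unfold dimR. rewrite Hn, !plus_INR. simpl. lra. Qed.

Lemma g_der (s : R) : 0 < s -> derivable_pt_lim g s (s * radial_lap n U1 U2 s).
Proof.
  intros Hs. destruct (HC s Hs) as [H1 [H2 _]].
  eapply dext.
  2: { apply (derivable_pt_lim_plus (fun s => (dimR n - 2) * U s) (fun s => s * U1 s)).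
       - eapply dext. 2: apply (derivable_pt_lim_mult (fct_cte (dimR n - 2)) U);
           [apply derivable_pt_lim_const | exact H1]. intros; reflexivity. reflexivity.
       - apply (derivable_pt_lim_mult id U1); [apply derivable_pt_lim_id | exact H2]. }
  - intros y. reflexivity.
  - unfold radial_lap, fct_cte, id. field. lra.
Qed.

Lemma g_decr (a b : R) : 0 < a -> a < b -> g b < g a.
Proof.
  intros Ha Hab.
  destruct (MVT_cor2 g (fun s => s * radial_lap n U1 U2 s) a b Hab) as [c [Hc1 Hc2]].
  { intros c Hc. apply g_der. lra. }
  assert (Hl : radial_lap n U1 U2 c < 0) by (apply Hsol; lra).
  assert (c * radial_lap n U1 U2 c * (b - a) < 0).
  { assert (0 < c * (b - a)) by (apply Rmult_lt_0_compat; lra). nra. }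
  lra.
Qed.

Let k (s : R) := s ^ (m + 1) * U s.

Lemma k_der (s : R) : 0 < s -> derivable_pt_lim k s (s ^ m * g s).
Proof.
  intros Hs. destruct (HC s Hs) as [H1 _].
  eapply dext.
  2: { apply (derivable_pt_lim_mult (fun s => s ^ (m + 1)) U);
       [apply derivable_pt_lim_pow | exact H1]. }
  - intros; reflexivity.
  - unfold g. rewrite dimR_eq. replace (Init.Nat.pred (m + 1)) with m by lia.
    rewrite pow_add. simpl. ring.
Qed.

Lemma g_pos (s : R) : 0 < s -> 0 < g s.
Proof.
  intros Hs. destruct (Rlt_or_le 0 (g s)) as [H|H]; [exact H|exfalso].
  set (s1 := s + 1).
  assert (Hg1 : g s1 < g s) by (apply g_decr; unfold s1; lra).
  set (c := - g s1).
  assert (Hc : 0 < c) by (unfold c; lra).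
  assert (Hs1 : 0 < s1) by (unfold s1; lra).
  assert (Hp : 0 < s1 ^ m) by (apply pow_lt; lra).
  assert (Hk : 0 <= k s1).
  { unfold k. apply Rlt_le, Rmult_lt_0_compat; [apply pow_lt; lra | apply Hsol; lra]. }
  set (b := s1 + k s1 / (c * s1 ^ m) + 1).
  assert (Hq : 0 <= k s1 / (c * s1 ^ m)).
  { apply Rle_mult_inv_pos; [exact Hk | apply Rmult_lt_0_compat; lra]. }
  assert (Hb : s1 < b) by (unfold b; lra).
  destruct (MVT_cor2 k (fun s => s ^ m * g s) s1 b Hb) as [c' [Hc1 Hc2]].
  { intros x Hx. apply k_der. lra. }
  assert (Hgc : g c' < g s1) by (apply g_decr; lra).
  assert (Hpc : s1 ^ m <= c' ^ m) by (apply pow_incr; lra).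
  assert (Hkd : c' ^ m * g c' <= - c * s1 ^ m).
  { assert (g c' <= - c) by (unfold c; lra). nra. }
  assert (Hkb : 0 < k b).
  { unfold k. apply Rmult_lt_0_compat; [apply pow_lt; lra | apply Hsol; lra]. }
  assert (Heq : (b - s1) * (c * s1 ^ m) = k s1 + c * s1 ^ m).
  { unfold b. field. split; lra. }
  assert (k b - k s1 <= - c * s1 ^ m * (b - s1)).
  { rewrite Hc1. apply Rmult_le_compat_r; lra. }
  nra.
Qed.

Lemma kelvin_der (r : R) : 0 < r ->
  exists l, derivable_pt_lim (kelvin n U) r l /\ l < 0.
Proof.
  intros Hr.
  assert (Hir : 0 < / r) by (apply Rinv_0_lt_compat; lra).
  destruct (HC (/ r) Hir) as [H1 _].
  set (P := Rpower r (1 - dimR n)).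
  assert (HP : 0 < P) by (unfold P, Rpower; apply exp_pos).
  exists (- P * g (/ r)). split.
  - eapply dext.
    2: { apply (derivable_pt_lim_mult (fun x => Rpower x (2 - dimR n)) (comp U (fun x => / x))).
         - apply derivable_pt_lim_power. exact Hr.
         - apply derivable_pt_lim_comp. apply d_inv. lra. exact H1. }
    + intros; reflexivity.
    + replace (2 - dimR n - 1) with (1 - dimR n) by ring.
      replace (2 - dimR n) with ((1 - dimR n) + 1) by ring.
      rewrite Rpower_plus, Rpower_1 by exact Hr. fold P.
      unfold comp, g. field. lra.
  - assert (0 < g (/ r)) by (apply g_pos; exact Hir). nra.
Qed.
End Comp.

Lemma wbar_der (n : nat) (q : R) (Ub : R -> R) :
  (forall r, 0 < r -> exists l, derivable_pt_lim Ub r l /\ l < 0) ->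
  forall t, exists l, derivable_pt_lim (wbar n q Ub) t l /\
                l > - delta0 n q * wbar n q Ub t.
Proof.
  intros HU t.
  destruct (HU (exp (- t)) (exp_pos _)) as [l [Hl Hl0]].
  set (d := delta0 n q).
  exists (- d * wbar n q Ub t + exp (- d * t) * (l * - exp (- t))). split.
  - eapply dext.
    2: { apply (derivable_pt_lim_mult (comp exp (fun t => - d * t)) (comp Ub (comp exp Ropp))).
         - apply derivable_pt_lim_comp.
           + eapply dext. 2: apply (derivable_pt_lim_mult (fct_cte (- d)) id);
               [apply derivable_pt_lim_const | apply derivable_pt_lim_id].
             intros; reflexivity. reflexivity.
           + apply derivable_pt_lim_exp.
         - apply derivable_pt_lim_comp; [|exact Hl].
           apply derivable_pt_lim_comp.
           + eapply dext. 2: apply (derivable_pt_lim_opp id), derivable_pt_lim_id.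
             intros; reflexivity. reflexivity.
           + apply derivable_pt_lim_exp. }
    + intros; reflexivity.
    + unfold comp, wbar, fct_cte, id. fold d. ring.
  - assert (0 < exp (- d * t) * (l * - exp (- t))).
    { apply Rmult_lt_0_compat. apply exp_pos.
      assert (0 < exp (- t)) by apply exp_pos. nra. }
    fold d. lra.
Qed.

Theorem lemma4p4 (n : nat) (mu1 mu2 beta q : R) (U V : R -> R) :
  (3 <= n)%nat ->
  0 < mu1 -> 0 < mu2 -> 0 < beta ->
  dimR n / (dimR n - 2) < pexp q ->
  pexp q < (dimR n + 2) / (dimR n - 2) ->
  radial_positive_solution n mu1 mu2 beta q U V ->
  (forall r, 0 < r ->
     (exists l, derivable_pt_lim (kelvin n U) r l /\ l < 0) /\
     (exists l, derivable_pt_lim (kelvin n V) r l /\ l < 0)) /\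
  (forall t : R,
     (exists l, derivable_pt_lim (wbar n q (kelvin n U)) t l /\
                l > - delta0 n q * wbar n q (kelvin n U) t) /\
     (exists l, derivable_pt_lim (wbar n q (kelvin n V)) t l /\
                l > - delta0 n q * wbar n q (kelvin n V) t)).
Proof.
  intros Hn Hm1 Hm2 Hb _ _ [U1 [U2 [V1 [V2 [HU [HV Hs]]]]]].
  destruct (Nat.le_exists_sub 3 n Hn) as [m [Hm _]].
  assert (Hpos : forall x y, 0 < Rpower x y) by (intros; unfold Rpower; apply exp_pos).
  assert (K : forall r, 0 < r ->
     (exists l, derivable_pt_lim (kelvin n U) r l /\ l < 0) /\
     (exists l, derivable_pt_lim (kelvin n V) r l /\ l < 0)).
  { intros r Hr. split.
    - apply (kelvin_der n m U U1 U2); [exact Hm | exact HU | | exact Hr].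
      intros s Hs0. destruct (Hs s Hs0) as [A [B [C D]]]. split; [exact A|].
      assert (0 < mu1 * Rpower (U s) (2 * q + 1) + beta * Rpower (U s) q * Rpower (V s) (q + 1)).
      { apply Rplus_lt_0_compat; apply Rmult_lt_0_compat; auto; apply Rmult_lt_0_compat; auto. }
      lra.
    - apply (kelvin_der n m V V1 V2); [exact Hm | exact HV | | exact Hr].
      intros s Hs0. destruct (Hs s Hs0) as [A [B [C D]]]. split; [exact B|].
      assert (0 < mu2 * Rpower (V s) (2 * q + 1) + beta * Rpower (V s) q * Rpower (U s) (q + 1)).
      { apply Rplus_lt_0_compat; apply Rmult_lt_0_compat; auto; apply Rmult_lt_0_compat; auto. }
      lra. }
  split; [exact K|].
  intros t; split; apply wbar_der; intros r Hr; apply (K r Hr).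
Qed.
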